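(* Let $\mathcal{S},\mathcal{T},\mathcal{U},\mathcal{B}$ be tile sets consisting only of exact tiles, with mutually consistent frequencies. Then \[ d(\mathcal{T},\mathcal{U};\mathcal{B})\le d(\mathcal{T},\mathcal{S};\mathcal{B})+d(\mathcal{S},\mathcal{U};\mathcal{B}). \]
   Context: Fix $n,m\ge1$; $\mathcal{D}$ is the set of $n\times m$ binary matrices. A tile is $T=(t(T),a(T))$ with nonempty $t(T)\subseteq\{1..n\}$, $a(T)\subseteq\{1..m\}$, $\mathrm{area}(T)=t(T)\times a(T)$. $\mathrm{fr}(T;D)=\frac1{|\mathrm{area}(T)|}\sum_{(i,j)\in\mathrm{area}(T)}D(i,j)$, $\mathrm{fr}(T;p)=\sum_Dp(D)\mathrm{fr}(T;D)$. Each tile carries a target frequency $\alpha_T$; tile sets are consistent if some distribution on $\mathcal{D}$ attains all target frequencies simultaneously. For a tile set $\mathcal{T}$, $p^*_{\mathcal{T}}$ is the entropy-maximising distribution among those with $\mathrm{fr}(T;p)=\alpha_T$ for all $T\in\mathcal{T}$. $\mathrm{KL}(\mathcal{T}\|\mathcal{U})=\mathrm{KL}(p^*_{\mathcal{T}}\|p^*_{\mathcal{U}})$. A tile is exact if its frequency is $0$ or $1$. With $\mathcal{M}=\mathcal{T}\cup\mathcal{U}\cup\mathcal{B}$, $d(\mathcal{T},\mathcal{U};\mathcal{B})=\frac{\mathrm{KL}(\mathcal{M}\|\mathcal{U}\cup\mathcal{B})+\mathrm{KL}(\mathcal{M}\|\mathcal{T}\cup\mathcal{B})}{\mathrm{KL}(\mathcal{M}\|\mathcal{B})}$,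 defined as $1$ if $\mathrm{KL}(\mathcal{M}\|\mathcal{B})=0$. *)

(* Defs.v *)
From mathcomp Require Import all_boot.
From Stdlib Require Import Reals ClassicalEpsilon.
Set Implicit Arguments. Unset Strict Implicit. Unset Printing Implicit Defensive.

Open Scope R_scope.

Definition Mat (n m : nat) := {ffun 'I_n * 'I_m -> bool}.

(* A tile: a set of rows t(T), a set of columns a(T), and a target frequency. *)
Record tile (n m : nat) := Tile {
  trows : {set 'I_n};
  tcols : {set 'I_m};
  talpha : R }.

(* a tile set is a finite list of tiles; union of tile sets = concatenation *)
Definition tileset (n m : nat) := seq (tile n m).

Definition tileset_wf n m (TS : tileset n m) : Prop :=
  forall T, List.In T TS -> trows T != set0 /\ tcols T != set0.

Definition tileset_exact n m (TS : tileset n m) : Prop :=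
  forall T, List.In T TS -> talpha T = 0 \/ talpha T = 1.

Definition sumM n m (f : Mat n m -> R) : R := \big[Rplus/0]_(D : Mat n m) f D.

Definition fr n m (T : tile n m) (D : Mat n m) : R :=
  / INR (muln #|trows T| #|tcols T|) *
  \big[Rplus/0]_(ij in setX (trows T) (tcols T)) (if D ij then 1 else 0).

Definition is_distr n m (p : Mat n m -> R) : Prop :=
  (forall D, 0 <= p D) /\ sumM p = 1.

Definition frp n m (T : tile n m) (p : Mat n m -> R) : R :=
  sumM (fun D => p D * fr T D).

Definition feasible n m (TS : tileset n m) (p : Mat n m -> R) : Prop :=
  is_distr p /\ forall T, List.In T TS -> frp T p = talpha T.

Definition consistent n m (TS : tileset n m) : Prop := exists p, feasible TS p.

Definition xlnx (x : R) : R := if Rle_dec x 0 then 0 else x * ln x.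

Definition entropy n m (p : Mat n m -> R) : R := - sumM (fun D => xlnx (p D)).

Definition is_maxent n m (TS : tileset n m) (p : Mat n m -> R) : Prop :=
  feasible TS p /\ forall q, feasible TS q -> entropy q <= entropy p.

(* p*_TS : the entropy-maximising feasible distribution (chosen by epsilon;
   it exists and is unique whenever TS is consistent). *)
Definition pstar n m (TS : tileset n m) : Mat n m -> R :=
  epsilon (inhabits (fun _ : Mat n m => 0)) (is_maxent TS).

Definition KLd n m (p q : Mat n m -> R) : R :=
  sumM (fun D => if Rle_dec (p D) 0 then 0 else p D * ln (p D / q D)).

Definition KL n m (TS US : tileset n m) : R := KLd (pstar TS) (pstar US).

Definition dtile n m (TT UU BB : tileset n m) : R :=
  let MM := TT ++ UU ++ BB in
  let k := KL MM BB in
  if Req_EM_T k 0 then 1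
  else (KL MM (UU ++ BB) + KL MM (TT ++ BB)) / k.

(* Main.v *)
Require Import Defs.
From HB Require Import structures.
From mathcomp Require Import all_boot.
From Stdlib Require Import Reals Lra Psatz ClassicalEpsilon FunctionalExtensionality.
Set Implicit Arguments. Unset Strict Implicit. Unset Printing Implicit Defensive.
Open Scope R_scope.
HB.instance Definition _ := Monoid.isComLaw.Build R 0 Rplus (fun a b c => esym (Rplus_assoc a b c)) Rplus_comm Rplus_0_l.

Lemma sum_ge0 (I : finType) (P : pred I) (f : I -> R) :
  (forall i, 0 <= f i) -> 0 <= \big[Rplus/0]_(i | P i) f i.
Proof. move=> H; elim/big_ind: _ => //; [lra| move=> *; lra]. Qed.

Lemma sum_le (I : finType) (P : pred I) (f g : I -> R) :
  (forall i, f i <= g i) -> \big[Rplus/0]_(i | P i) f i <= \big[Rplus/0]_(i | P i) g i.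
Proof. move=> H; elim/big_ind2: _ => //; [lra| move=> *; lra]. Qed.

Lemma sum_scal (I : finType) (P : pred I) (f : I -> R) c :
  \big[Rplus/0]_(i | P i) (c * f i) = c * \big[Rplus/0]_(i | P i) f i.
Proof. elim/big_rec2: _ => //; [lra| move=> i y1 y2 _ ->; lra]. Qed.

Lemma sum_opp (I : finType) (P : pred I) (f : I -> R) :
  \big[Rplus/0]_(i | P i) (- f i) = - \big[Rplus/0]_(i | P i) f i.
Proof. elim/big_rec2: _ => //; [lra| move=> i y1 y2 _ ->; lra]. Qed.

Lemma sum_eq0_ge0 (I : finType) (f : I -> R) :
  (forall i, 0 <= f i) -> \big[Rplus/0]_i f i = 0 -> forall i, f i = 0.
Proof.
move=> H S i; move: S; rewrite (bigD1 i) //= => S.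
have := sum_ge0 (fun j => j != i) H; have := H i; lra.
Qed.

Lemma sum_const_set (I : finType) (A : {set I}) c :
  \big[Rplus/0]_i (if i \in A then c else 0) = INR #|A| * c.
Proof.
rewrite -big_mkcond /= big_const.
elim: #|A| => [|k IH] /=; first lra.
rewrite IH; case: k {IH} => [|k] /=; lra.
Qed.

Lemma sum_in_const (I : finType) (A : {set I}) c :
  \big[Rplus/0]_(i in A) c = INR #|A| * c.
Proof. by rewrite big_mkcond /= sum_const_set. Qed.

Lemma sum_eq0_ge0P (I : finType) (P : pred I) (f : I -> R) :
  (forall i, 0 <= f i) -> \big[Rplus/0]_(i | P i) f i = 0 -> forall i, P i -> f i = 0.
Proof.
move=> H S i Pi; move: S; rewrite (bigD1 i) //= => S.
have := sum_ge0 (fun j => P j && (j != i)) H; have := H i; lra.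
Qed.

Lemma sum_sub (I : finType) (P : pred I) (f g : I -> R) :
  \big[Rplus/0]_(i | P i) (f i - g i) = \big[Rplus/0]_(i | P i) f i - \big[Rplus/0]_(i | P i) g i.
Proof. rewrite /Rminus big_split /= sum_opp; lra. Qed.

Definition area n m (T : tile n m) := setX (trows T) (tcols T).

Definition frS n m (T : tile n m) (D : Mat n m) :=
  \big[Rplus/0]_(ij in area T) (if D ij then 1 else 0).

Lemma fr_frS n m (T : tile n m) D : fr T D = / INR #|area T| * frS T D.
Proof. by rewrite /fr /area cardsX. Qed.

Lemma area_pos n m (T : tile n m) : trows T != set0 -> tcols T != set0 -> 0 < INR #|area T|.
Proof.
move=> h1 h2; apply: lt_0_INR; apply/ltP.
by rewrite /area cardsX muln_gt0 !card_gt0 h1 h2.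
Qed.

Lemma frS_bounds n m (T : tile n m) D : 0 <= frS T D <= INR #|area T|.
Proof.
split; first by apply: sum_ge0 => i; case: (D i); lra.
rewrite -[INR _]Rmult_1_r -sum_in_const; apply: sum_le => i; case: (D i); lra.
Qed.

Lemma frS0 n m (T : tile n m) D : frS T D = 0 -> forall c, c \in area T -> D c = false.
Proof.
move=> h c hc.
have H0 : forall i, 0 <= (fun ij => if D ij then 1 else 0) i by move=> i; case: (D i); lra.
have := sum_eq0_ge0P (P := fun ij => ij \in area T) H0 h hc.
by case: (D c) => //= ; lra.
Qed.

Lemma frSfull n m (T : tile n m) D : frS T D = INR #|area T| -> forall c, c \in area T -> D c = true.
Proof.
move=> h c hc.
have h2 : \big[Rplus/0]_(ij in area T) (1 - if D ij then 1 else 0) = 0.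
  by rewrite sum_sub sum_in_const -/(frS T D) h; lra.
have H0 : forall i, 0 <= (fun ij => 1 - if D ij then 1 else 0) i by move=> i; case: (D i); lra.
have := sum_eq0_ge0P (P := fun ij => ij \in area T) H0 h2 hc.
by case: (D c) => //= ; lra.
Qed.

Lemma fr_bounds n m (T : tile n m) D : trows T != set0 -> tcols T != set0 ->
  0 <= fr T D <= 1.
Proof.
move=> h1 h2; rewrite fr_frS; have P := area_pos h1 h2; have B := frS_bounds T D.
have I : 0 < / INR #|area T| by apply: Rinv_0_lt_compat.
split; first nra.
have -> : 1 = / INR #|area T| * INR #|area T| by field; lra.
nra.
Qed.

Lemma fr0 n m (T : tile n m) D : trows T != set0 -> tcols T != set0 ->
  fr T D = 0 -> forall c, c \in area T -> D c = false.
Proof.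
move=> h1 h2; rewrite fr_frS => h; apply: frS0; have P := area_pos h1 h2.
have I : / INR #|area T| <> 0 by apply: Rinv_neq_0_compat; lra.
by case: (Rmult_integral _ _ h).
Qed.

Lemma fr1 n m (T : tile n m) D : trows T != set0 -> tcols T != set0 ->
  fr T D = 1 -> forall c, c \in area T -> D c = true.
Proof.
move=> h1 h2; rewrite fr_frS => h; apply: frSfull; have P := area_pos h1 h2.
have -> : frS T D = INR #|area T| * (/ INR #|area T| * frS T D) by field; lra.
rewrite h; lra.
Qed.

Lemma fr_agree n m (T : tile n m) (D D' : Mat n m) : (forall c, c \in area T -> D c = D' c) ->
  fr T D = fr T D'.
Proof. move=> h; rewrite !fr_frS /frS; congr (_ * _); apply: eq_bigr => i hi; by rewrite h. Qed.

Lemma distr_pos n m (p : Mat n m -> R) : is_distr p -> exists D, 0 < p D.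
Proof.
move=> [H S]; apply: NNPP => N.
have Z : forall D, p D = 0.
  move=> D; have := H D; case: (Rle_lt_or_eq_dec _ _ (H D)) => // h _.
  by exfalso; apply: N; exists D.
move: S; rewrite /sumM big1; [lra | by move=> D _; rewrite Z].
Qed.

Lemma feas_fr n m (X : tileset n m) p T D : tileset_wf X -> tileset_exact X ->
  feasible X p -> List.In T X -> 0 < p D -> fr T D = talpha T.
Proof.
move=> W E [[Hp Hs] Hf] HT HD.
have [h1 h2] := W T HT; have B := fr_bounds D h1 h2.
have F := Hf T HT; rewrite /frp /sumM in F.
case: (E T HT) => ha; rewrite ha in F *.
- have H0 : forall D, 0 <= (fun D => p D * fr T D) D.
    by move=> D'; have := fr_bounds D' h1 h2; have := Hp D'; nra.
  have := sum_eq0_ge0 H0 F D => /= /Rmult_integral [] //; lra.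
- have G : \big[Rplus/0]_(D : Mat n m) (p D * (1 - fr T D)) = 0.
    rewrite (eq_bigr (fun D => p D - p D * fr T D)); last by move=> *; ring.
    by rewrite sum_sub F; rewrite /sumM in Hs; rewrite Hs; ring.
  have H0 : forall D, 0 <= (fun D => p D * (1 - fr T D)) D.
    by move=> D'; have := fr_bounds D' h1 h2; have := Hp D'; nra.
  have := sum_eq0_ge0 H0 G D => /= /Rmult_integral [] //; lra.
Qed.

Definition FX n m (X : tileset n m) : {set 'I_n * 'I_m} := \big[@setU _/set0]_(t <- X) area t.

Lemma FX_cat n m (X Y : tileset n m) : FX (X ++ Y) = FX X :|: FX Y.
Proof. by rewrite /FX big_cat. Qed.

Lemma inFX n m (X : tileset n m) c : c \in FX X -> exists T, List.In T X /\ c \in area T.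
Proof.
elim: X => [|T X IH]; first by rewrite /FX big_nil inE.
rewrite /FX big_cons inE => /orP [h|h]; first by exists T; split => //; left.
by have [T' [h1 h2]] := IH h; exists T'; split => //; right.
Qed.

Lemma areaFX n m (X : tileset n m) T c : List.In T X -> c \in area T -> c \in FX X.
Proof.
elim: X => [|T' X IH] //= [<-|h] hc; rewrite /FX big_cons inE ?hc //.
by rewrite -/(FX X) IH ?orbT.
Qed.

Definition AX n m (X : tileset n m) (D0 : Mat n m) : {set Mat n m} :=
  [set D : Mat n m | [forall c in FX X, D c == D0 c]].

Lemma inAX n m (X : tileset n m) D0 D : D \in AX X D0 -> forall c, c \in FX X -> D c = D0 c.
Proof. by rewrite inE => /forall_inP h c /h /eqP. Qed.

Lemma D0_AX n m (X : tileset n m) D0 : D0 \in AX X D0.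
Proof. by rewrite inE; apply/forall_inP. Qed.

Definition good n m (X : tileset n m) D0 := forall T, List.In T X -> fr T D0 = talpha T.

Lemma feas_AX n m (X : tileset n m) D0 p D : tileset_wf X -> tileset_exact X ->
  good X D0 -> feasible X p -> 0 < p D -> D \in AX X D0.
Proof.
move=> W E G F pD; rewrite inE; apply/forall_inP => c /inFX [T [HT hc]].
have [h1 h2] := W T HT.
have e1 := feas_fr W E F HT pD; have e2 := G T HT.
case: (E T HT) => ha; rewrite ha in e1 e2.
- by rewrite (fr0 h1 h2 e1 hc) (fr0 h1 h2 e2 hc).
- by rewrite (fr1 h1 h2 e1 hc) (fr1 h1 h2 e2 hc).
Qed.

Lemma AX_fr n m (X : tileset n m) D0 D T : good X D0 -> D \in AX X D0 -> List.In T X ->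
  fr T D = talpha T.
Proof.
move=> G hD HT; rewrite -(G T HT); apply: fr_agree => c hc.
by apply: (inAX hD); apply: areaFX HT hc.
Qed.

Definition unif n m (A : {set Mat n m}) : Mat n m -> R :=
  fun D => if D \in A then / INR #|A| else 0.

Lemma cardA_pos n m (A : {set Mat n m}) D0 : D0 \in A -> 0 < INR #|A|.
Proof. by move=> h; apply: lt_0_INR; apply/ltP; rewrite card_gt0; apply/set0Pn; exists D0. Qed.

Lemma sum_const_setM n m (A : {set Mat n m}) c :
  \big[Rplus/0]_(D : Mat n m) (if D \in A then c else 0) = INR #|A| * c.
Proof. exact: sum_const_set. Qed.

Lemma unif_distr n m (A : {set Mat n m}) D0 : D0 \in A -> is_distr (unif A).
Proof.
move=> h; have P := cardA_pos h; split.
  by move=> D; rewrite /unif; case: (D \in A) => //; [left; apply: Rinv_0_lt_compat | lra].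
rewrite /sumM /unif sum_const_setM; field; lra.
Qed.

Lemma unif_feasible n m (X : tileset n m) D0 : good X D0 -> feasible X (unif (AX X D0)).
Proof.
move=> G; split; first exact: (unif_distr (D0_AX X D0)).
move=> T HT; rewrite /frp /sumM.
rewrite (eq_bigr (fun D => if D \in AX X D0 then / INR #|AX X D0| * talpha T else 0)).
  by rewrite sum_const_setM; have := cardA_pos (D0_AX X D0); move=> P; field; lra.
move=> D _; rewrite /unif; case: ifP => h; last ring.
by rewrite (AX_fr G h HT).
Qed.

Lemma ln_le_sub1 x : 0 < x -> ln x <= x - 1.
Proof.
move=> h; case: (Req_dec (ln x) 0) => e.
  have : x = 1 by rewrite -(exp_ln x h) e exp_0.
  move=> ->; rewrite ln_1; lra.
have := exp_ineq1 (ln x) e; rewrite exp_ln //; lra.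
Qed.

Lemma ln_eq_sub1 x : 0 < x -> ln x = x - 1 -> x = 1.
Proof.
move=> h E; case: (Req_dec (ln x) 0) => e.
  by rewrite -(exp_ln x h) e exp_0.
have := exp_ineq1 (ln x) e; rewrite exp_ln //; lra.
Qed.

Lemma xlnx_le0 x : x <= 0 -> xlnx x = 0.
Proof. by rewrite /xlnx; case: Rle_dec. Qed.

Lemma xlnx_pos x : 0 < x -> xlnx x = x * ln x.
Proof. move=> h; rewrite /xlnx; case: Rle_dec => c //; lra. Qed.

Lemma entropy_unif n m (A : {set Mat n m}) D0 : D0 \in A -> entropy (unif A) = ln (INR #|A|).
Proof.
move=> h; have P := cardA_pos h.
rewrite /entropy /sumM.
rewrite (eq_bigr (fun D => if D \in A then / INR #|A| * ln (/ INR #|A|) else 0)).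
  rewrite sum_const_setM ln_Rinv //; field; lra.
move=> D _; rewrite /unif; case: ifP => _; last by rewrite xlnx_le0 //; lra.
by rewrite xlnx_pos //; apply: Rinv_0_lt_compat.
Qed.

Lemma entropy_bound n m (A : {set Mat n m}) D0 q : D0 \in A -> is_distr q ->
  (forall D, 0 < q D -> D \in A) ->
  entropy q <= ln (INR #|A|) /\ (entropy q = ln (INR #|A|) -> q = unif A).
Proof.
move=> h [Hq Hs] Hsupp; have P := cardA_pos h.
set k := INR #|A| in P *.
have Ek : INR #|A| = k by [].
clearbody k.
have q0 : forall D, D \notin A -> q D = 0.
  move=> D hD; case: (Rle_lt_or_eq_dec _ _ (Hq D)) => // c.
  by rewrite (Hsupp D c) in hD.
pose g D := if Rle_dec (q D) 0 then 0 else q D * ln (/ (k * q D)).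
pose f D := (if D \in A then / k else 0) - q D - g D.
have g_eq : forall D, g D = - q D * ln k - xlnx (q D).
  move=> D; rewrite /g; case: Rle_dec => c /=.
    have -> : q D = 0 by have := Hq D; lra.
    rewrite xlnx_le0; lra.
  rewrite xlnx_pos; last lra.
  rewrite Rinv_mult ln_mult; [|apply: Rinv_0_lt_compat; lra|apply: Rinv_0_lt_compat; lra].
  rewrite !ln_Rinv; lra.
have f_ge0 : forall D, 0 <= f D.
  move=> D; rewrite /f /g; case: Rle_dec => c /=.
    case: ifP => hD; last by rewrite q0 ?hD //; lra.
    have := Rinv_0_lt_compat _ P; have := Hq D; lra.
  have hD : D \in A by apply: Hsupp; lra.
  rewrite hD.
  have x0 : 0 < / (k * q D) by apply: Rinv_0_lt_compat; nra.
  have Lx := ln_le_sub1 x0.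
  have e : q D * / (k * q D) = / k by field; lra.
  have : q D * ln (/ (k * q D)) <= q D * (/ (k * q D) - 1) by apply: Rmult_le_compat_l; lra.
  lra.
have sumf : \big[Rplus/0]_(D : Mat n m) f D = ln k - entropy q.
  rewrite /f sum_sub sum_sub sum_const_setM.
  rewrite -/(sumM q) Hs (eq_bigr _ (fun D _ => g_eq D)) sum_sub.
  rewrite (eq_bigr (fun D => (- ln k) * q D)); last by move=> *; ring.
  rewrite sum_scal -/(sumM q) Hs /entropy Ek Rinv_r; last lra.
  set B := sumM _. have -> : \big[Rplus/0]_i xlnx (q i) = B by []. ring.
have H1 : entropy q <= ln k.
  have := sum_ge0 predT f_ge0; rewrite sumf; lra.
split => // E.
have S0 : \big[Rplus/0]_(D : Mat n m) f D = 0 by rewrite sumf E; ring.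
have F0 := sum_eq0_ge0 f_ge0 S0.
apply: functional_extensionality => D; rewrite /unif Ek.
case: ifP => hD; last by rewrite q0 ?hD.
have := F0 D; rewrite /f hD /g; case: Rle_dec => c /=.
  move=> e; have := Rinv_0_lt_compat _ P; have := Hq D; lra.
move=> e.
have x0 : 0 < / (k * q D) by apply: Rinv_0_lt_compat; nra.
have ee : q D * / (k * q D) = / k by field; lra.
have L : ln (/ (k * q D)) = / (k * q D) - 1.
  apply: (Rmult_eq_reg_l (q D)); last lra.
  rewrite Rmult_minus_distr_l ee; lra.
have := ln_eq_sub1 x0 L => e1.
have : k * q D = 1.
  by rewrite -[k * q D]Rinv_inv e1 Rinv_1.
move=> e2; apply: (Rmult_eq_reg_l k); last lra.
rewrite e2; field; lra.
Qed.

Definition J (num den : R) : R := if Req_EM_T den 0 then 1 else num / den.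

Lemma frac_le a b c d : 0 < b -> 0 < d -> a * d <= c * b -> a / b <= c / d.
Proof.
move=> hb hd h.
have e : c / d - a / b = (c * b - a * d) * (/ b * / d) by field; lra.
have : 0 <= (c * b - a * d) * (/ b * / d).
  apply: Rmult_le_pos; first lra.
  apply: Rmult_le_pos; left; apply: Rinv_0_lt_compat => //.
lra.
Qed.

Lemma J_L L a b c : 0 < L -> J (a * L + b * L) (c * L) = J (a + b) c.
Proof.
move=> hL; rewrite /J; case: Req_EM_T => h1 /=; case: Req_EM_T => h2 //=.
- exfalso; apply: h2; have := Rmult_integral _ _ h1; lra.
- by exfalso; apply: h1; rewrite h2; ring.
- field; split; lra.
Qed.

Lemma J_ge0 a c : 0 <= a -> 0 <= c -> 0 <= J a c.
Proof.
move=> ha hc; rewrite /J; case: Req_EM_T => h /=; first lra.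
apply: Rmult_le_pos => //; left; apply: Rinv_0_lt_compat; lra.
Qed.

Lemma J_le1 a c : 0 <= a <= c -> J a c <= 1.
Proof.
move=> [ha hc]; rewrite /J; case: Req_EM_T => h /=; first lra.
have -> : 1 = c / c by field.
apply: frac_le; nra.
Qed.

Lemma jaccard w X Y Z XY XZ ZY XYZ :
  0 <= XYZ -> XYZ <= XY -> XYZ <= XZ -> XYZ <= ZY ->
  XY <= X -> XY <= Y -> XZ <= X -> XZ <= Z -> ZY <= Z -> ZY <= Y ->
  X + Y <= w + XY -> X + Z <= w + XZ -> Z + Y <= w + ZY ->
  XZ + ZY <= Z + XYZ ->
  J ((Y - XY) + (X - XY)) (w - XY) <=
  J ((Z - XZ) + (X - XZ)) (w - XZ) + J ((Y - ZY) + (Z - ZY)) (w - ZY).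
Proof.
move=> *.
have J2 : 0 <= J ((Z - XZ) + (X - XZ)) (w - XZ) by apply: J_ge0; lra.
have J3 : 0 <= J ((Y - ZY) + (Z - ZY)) (w - ZY) by apply: J_ge0; lra.
have J1 : J ((Y - XY) + (X - XY)) (w - XY) <= 1 by apply: J_le1; lra.
rewrite {1}/J; case: Req_EM_T => h1 /=.
  have e2 : J (Z - XZ + (X - XZ)) (w - XZ) = 1.
    rewrite /J; case: Req_EM_T => h2 //=.
    field_simplify_eq; lra.
  lra.
have h2 : J ((Z - XZ) + (X - XZ)) (w - XZ) = 1 \/ w - XZ <> 0.
  by rewrite /J; case: Req_EM_T; [left|right].
have h3 : J ((Y - ZY) + (Z - ZY)) (w - ZY) = 1 \/ w - ZY <> 0.
  by rewrite /J; case: Req_EM_T; [left|right].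
case: h2 => h2.
  rewrite h2; rewrite /J in J1; case: Req_EM_T h1 J1 => //= ; lra.
case: h3 => h3.
  rewrite h3; rewrite /J in J1; case: Req_EM_T h1 J1 => //= ; lra.
rewrite /J; do 2 (case: Req_EM_T => //= _).
have V : 0 < w - XYZ by lra.
apply: (Rle_trans _ ((Y + X - XY - XYZ) / (w - XYZ))).
  apply: frac_le; [lra|lra|nra].
apply: (Rle_trans _ ((Z - XZ + (X - XZ)) / (w - XYZ) + (Y - ZY + (Z - ZY)) / (w - XYZ))).
  have -> : (Z - XZ + (X - XZ)) / (w - XYZ) + (Y - ZY + (Z - ZY)) / (w - XYZ) =
            (Z - XZ + (X - XZ) + (Y - ZY + (Z - ZY))) / (w - XYZ) by field; lra.
  apply: frac_le; [lra|lra|nra].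
apply: Rplus_le_compat; apply: frac_le; nra.
Qed.

Lemma pstar_eq n m (X : tileset n m) D0 : tileset_wf X -> tileset_exact X -> good X D0 ->
  pstar X = unif (AX X D0).
Proof.
move=> W E G.
have hD0 := D0_AX X D0.
have Hu : is_maxent X (unif (AX X D0)).
  split; first exact: unif_feasible.
  move=> q Fq; rewrite (entropy_unif hD0).
  have [B _] := entropy_bound hD0 (proj1 Fq) (fun D => feas_AX W E G Fq).
  exact: B.
have Hp : is_maxent X (pstar X) by apply: epsilon_spec; exists (unif (AX X D0)).
have [Fp Mp] := Hp.
have [B Eq] := entropy_bound hD0 (proj1 Fp) (fun D => feas_AX W E G Fp).
apply: Eq; have := Mp _ (proj1 Hu); rewrite (entropy_unif hD0); lra.
Qed.

Lemma KL_unif n m (A B : {set Mat n m}) D0 : D0 \in A -> A \subset B ->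
  KLd (unif A) (unif B) = ln (INR #|B|) - ln (INR #|A|).
Proof.
move=> hA sAB; have hB : D0 \in B by apply: (subsetP sAB).
have PA := cardA_pos hA; have PB := cardA_pos hB.
rewrite /KLd /sumM.
rewrite (eq_bigr (fun D => if D \in A then / INR #|A| * (ln (INR #|B|) - ln (INR #|A|)) else 0)).
  rewrite sum_const_setM; field; lra.
move=> D _; rewrite /unif; case h: (D \in A).
  rewrite (subsetP sAB D h).
  case: Rle_dec => c /=.
    by exfalso; have := Rinv_0_lt_compat _ PA; lra.
  rewrite /Rdiv Rinv_inv ln_mult; [|apply: Rinv_0_lt_compat; exact: PA|exact: PB].
  rewrite (ln_Rinv _ PA); set a := INR #|A|; ring.
by case: Rle_dec => c //=; lra.
Qed.

Lemma INR_exp2 k : INR (expn 2 k) = 2 ^ k.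
Proof.
elim: k => [|k IH]; first by rewrite expn0 /=.
by rewrite expnS mulnE mult_INR IH /=.
Qed.

Lemma card_AX n m (X : tileset n m) D0 : #|AX X D0| = expn 2 #|~: FX X|.
Proof.
pose h (D : Mat n m) : Mat n m := [ffun c => D c != D0 c].
have hK : involutive h.
  by move=> D; apply/ffunP => c; rewrite !ffunE; case: (D c); case: (D0 c).
rewrite -card_bool -(card_pffun_on false (~: FX X) predT).
rewrite -(card_imset _ (inv_inj hK)).
apply: eq_card => f; apply/imsetP/pffun_onP.
- move=> [D hD ->]; split; last by move=> y _.
  apply/subsetP => c; rewrite !inE ffunE; apply: contra => hc.
  by rewrite (inAX hD hc) eqxx.
- move=> [S _]; exists (h f); last by rewrite hK.
  rewrite inE; apply/forall_inP => c hc; rewrite ffunE.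
  have fc : f c = false.
    apply/negP => fc; have := subsetP S c; rewrite !inE fc hc /=.
    by move=> /(_ isT).
  by rewrite fc; case: (D0 c).
Qed.

Lemma ln_card_AX n m (X : tileset n m) D0 : ln (INR #|AX X D0|) = INR #|~: FX X| * ln 2.
Proof. by rewrite card_AX INR_exp2 ln_pow //; lra. Qed.

Lemma wf_cat n m (X Y : tileset n m) : tileset_wf X -> tileset_wf Y -> tileset_wf (X ++ Y).
Proof. move=> h1 h2 T h; case: (List.in_app_or _ _ _ h) => h'; [exact: h1 | exact: h2]. Qed.

Lemma exact_cat n m (X Y : tileset n m) : tileset_exact X -> tileset_exact Y -> tileset_exact (X ++ Y).
Proof. move=> h1 h2 T h; case: (List.in_app_or _ _ _ h) => h'; [exact: h1 | exact: h2]. Qed.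

Lemma good_sub n m (X Z : tileset n m) D0 : good Z D0 -> (forall T, List.In T X -> List.In T Z) -> good X D0.
Proof. by move=> G S T /S /G. Qed.

Lemma KL_formula n m (M Y : tileset n m) D0 :
  tileset_wf M -> tileset_exact M -> good M D0 ->
  tileset_wf Y -> tileset_exact Y -> good Y D0 ->
  FX Y \subset FX M ->
  KL M Y = (INR #|~: FX Y| - INR #|~: FX M|) * ln 2.
Proof.
move=> W1 E1 G1 W2 E2 G2 S.
rewrite /KL (pstar_eq W1 E1 G1) (pstar_eq W2 E2 G2).
rewrite (KL_unif (D0_AX M D0)).
  by rewrite !ln_card_AX; ring.
apply/subsetP => D hD; rewrite inE; apply/forall_inP => c hc.
by rewrite (inAX hD (subsetP S c hc)).
Qed.

Lemma card_ineq (T : finType) (P Q U I : {set T}) :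
  P :|: Q \subset U -> P :&: Q = I -> (#|P| + #|Q| <= #|U| + #|I|)%nat.
Proof.
move=> hU hI; rewrite -cardsUI hI leq_add2r; exact: subset_leq_card.
Qed.

Lemma leR a b : (a <= b)%nat -> INR a <= INR b.
Proof. by move=> h; apply: le_INR; apply/leP. Qed.

Lemma leR2 a b c d : (a + b <= c + d)%nat -> INR a + INR b <= INR c + INR d.
Proof. by move=> h; rewrite -!plus_INR !plusE; apply: leR. Qed.

Lemma dtileE n m (TT UU BB : tileset n m) : dtile TT UU BB =
  J (KL (TT ++ UU ++ BB) (UU ++ BB) + KL (TT ++ UU ++ BB) (TT ++ BB)) (KL (TT ++ UU ++ BB) BB).
Proof. by []. Qed.

Ltac settac := apply/setP => c; rewrite !inE; do ![case: (_ \in _)] => //.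
Ltac subtac := apply/subsetP => c; rewrite !inE; do ![case: (_ \in _)] => //.

Ltac side := first [ by move=> T; rewrite ?List.in_app_iff; tauto
  | by do ?apply: wf_cat | by do ?apply: exact_cat | by rewrite ?FX_cat; subtac ].

Theorem theorem8 (n m : nat) (SS TT UU BB : tileset n m) :
  leq 1 n -> leq 1 m ->
  tileset_wf SS -> tileset_wf TT -> tileset_wf UU -> tileset_wf BB ->
  tileset_exact SS -> tileset_exact TT -> tileset_exact UU -> tileset_exact BB ->
  consistent (SS ++ TT ++ UU ++ BB) ->
  dtile TT UU BB <= dtile TT SS BB + dtile SS UU BB.
Proof.
move=> _ _ WS WT WU WB ES ET EU EB [p Fp].
have Wbig : tileset_wf (SS ++ TT ++ UU ++ BB) by do !apply: wf_cat.
have Ebig : tileset_exact (SS ++ TT ++ UU ++ BB) by do !apply: exact_cat.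
have [D0 pD0] := distr_pos (proj1 Fp).
have Gbig : good (SS ++ TT ++ UU ++ BB) D0.
  by move=> T HT; apply: (feas_fr Wbig Ebig Fp HT pD0).
have GX : forall X : tileset n m, (forall T, List.In T X -> List.In T (SS ++ TT ++ UU ++ BB)) -> good X D0.
  by move=> X; apply: good_sub.
have KLF : forall M Y : tileset n m,
    (forall T, List.In T M -> List.In T (SS ++ TT ++ UU ++ BB)) ->
    (forall T, List.In T Y -> List.In T (SS ++ TT ++ UU ++ BB)) ->
    tileset_wf M -> tileset_exact M -> tileset_wf Y -> tileset_exact Y ->
    FX Y \subset FX M -> KL M Y = (INR #|~: FX Y| - INR #|~: FX M|) * ln 2.
  move=> M Y h1 h2 w1 e1 w2 e2 S.
  by apply: KL_formula => //; apply: GX.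
have L2 : 0 < ln 2 by have := ln_lt_2; have := Rinv_0_lt_compat 2 ltac:(lra); lra.
rewrite !dtileE.
have inc : forall T, List.In T SS \/ List.In T TT \/ List.In T UU \/ List.In T BB ->
   List.In T (SS ++ TT ++ UU ++ BB).
  by move=> T H; rewrite !List.in_app_iff.
rewrite (KLF (TT++UU++BB) (UU++BB)); try side.
rewrite (KLF (TT++UU++BB) (TT++BB)); try side.
rewrite (KLF (TT++UU++BB) BB); try side.
rewrite (KLF (TT++SS++BB) (SS++BB)); try side.
rewrite (KLF (TT++SS++BB) (TT++BB)); try side.
rewrite (KLF (TT++SS++BB) BB); try side.
rewrite (KLF (SS++UU++BB) (UU++BB)); try side.
rewrite (KLF (SS++UU++BB) (SS++BB)); try side.
rewrite (KLF (SS++UU++BB) BB); try side.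
rewrite !FX_cat !setCU.
set a := ~: FX TT; set b := ~: FX UU; set s := ~: FX SS; set w := ~: FX BB.
rewrite !J_L //.
apply: (jaccard (XYZ := INR #|a :&: (s :&: (b :&: w))|)).
- exact: pos_INR.
- by apply: leR; apply: subset_leq_card; subtac.
- by apply: leR; apply: subset_leq_card; subtac.
- by apply: leR; apply: subset_leq_card; subtac.
- by apply: leR; apply: subset_leq_card; subtac.
- by apply: leR; apply: subset_leq_card; subtac.
- by apply: leR; apply: subset_leq_card; subtac.
- by apply: leR; apply: subset_leq_card; subtac.
- by apply: leR; apply: subset_leq_card; subtac.
- by apply: leR; apply: subset_leq_card; subtac.
- by apply: leR2; apply: card_ineq; [subtac|settac].
- by apply: leR2; apply: card_ineq; [subtac|settac].
- by apply: leR2; apply: card_ineq; [subtac|settac].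
- by apply: leR2; apply: card_ineq; [subtac|settac].
Qed.
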